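(* Let $M\ge2$ and let $\mathcal{P}$ be a Class II source set on $\{1,\dots,M\}$ with $P_1\ge P_2\ge\dots\ge P_M$ for every $P\in\mathcal{P}$, and let $D^{(M-1)}=\sup_{P\in\mathcal{P}}\sum_{i=2}^{M}P_i$. Then for $D\in[0,1]$, $\epsilon^*_{\mathrm{IT}}(\mathcal{P},D)=0$ if and only if $D\ge D^{(M-1)}$.
   Context: A source set is a nonempty set $\mathcal{P}$ of probability distributions on $\{1,\dots,M\}$; Class I means its convex hull contains the uniform distribution; Class II means it is not Class I and a single permutation orders all its distributions decreasingly. A mechanism is an $M\times M$ row-stochastic matrix $Q$ with entries $Q(j|i)$; its diagonal distortions are $D_i=1-Q(i|i)$. $Q$ is $(\mathcal{P},D)$-valid if $\sum_iP_iD_i\le D$ for all $P\in\mathcal{P}$; $\mathcal{Q}(\mathcal{P},D)$ is the set of these. $I(P;Q)$ is the mutual information $I(X;\hat X)$ for $X\sim P$, $\hat X\sim Q(\cdot|X)$; $\epsilon^*_{\mathrm{IT}}(\mathcal{P},D)=\min_{Q\in\mathcal{Q}(\mathcal{P},D)}\max_{P\in\mathcal{P}}I(P;Q)$. *)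

(* Defs.v *)
From HB Require Import structures.
From mathcomp Require Import all_boot all_order all_algebra.
From mathcomp Require Import all_classical all_reals.
From mathcomp Require Import ereal exp.
From mathcomp Require Import perm.
Set Implicit Arguments. Unset Strict Implicit. Unset Printing Implicit Defensive.
Import Order.TTheory GRing.Theory Num.Theory.
Local Open Scope classical_set_scope.
Local Open Scope ring_scope.

(* The alphabet {1,...,M} is represented by 'I_M = {0,...,M-1}
   (symbol k+1 of the paper is index k here). *)

Definition prob_dist (R : realType) (M : nat) (p : 'I_M -> R) : Prop :=
  (forall i, 0 <= p i) /\ \sum_(i < M) p i = 1.

Definition source_set (R : realType) (M : nat) (Ps : set ('I_M -> R)) : Prop :=
  Ps !=set0 /\ Ps `<=` @prob_dist R M.

(* The uniform distribution lies in the convex hull of Ps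
   (convex hull = set of finite convex combinations). *)
Definition classI (R : realType) (M : nat) (Ps : set ('I_M -> R)) : Prop :=
  exists (n : nat) (w : 'I_n -> R) (p : 'I_n -> 'I_M -> R),
    [/\ forall k, Ps (p k), forall k, 0 <= w k, \sum_(k < n) w k = 1 &
        forall i, \sum_(k < n) w k * p k i = M%:R^-1].

Definition classII (R : realType) (M : nat) (Ps : set ('I_M -> R)) : Prop :=
  ~ classI Ps /\
  exists s : 'S_M, forall P, Ps P ->
    forall i j : 'I_M, (i <= j)%N -> P (s j) <= P (s i).

(* Mechanisms: row-stochastic matrices, Q i j = Q(j|i). *)
Definition mechanism (R : realType) (M : nat) (Q : 'M[R]_M) : Prop :=
  (forall i j, 0 <= Q i j) /\ (forall i, \sum_(j < M) Q i j = 1).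

Definition distortion (R : realType) (M : nat) (Q : 'M[R]_M) (i : 'I_M) : R :=
  1 - Q i i.

Definition valid (R : realType) (M : nat) (Ps : set ('I_M -> R)) (D : R)
  (Q : 'M[R]_M) : Prop :=
  mechanism Q /\
  forall P, Ps P -> \sum_(i < M) P i * distortion Q i <= D.

Definition out_prob (R : realType) (M : nat) (P : 'I_M -> R) (Q : 'M[R]_M)
  (j : 'I_M) : R := \sum_(k < M) P k * Q k j.

Definition mutual_info (R : realType) (M : nat) (P : 'I_M -> R) (Q : 'M[R]_M) : R :=
  \sum_(i < M) \sum_(j < M)
    (if P i * Q i j == 0 then 0
     else P i * Q i j * ln (Q i j / out_prob P Q j)).

Definition eps_IT (R : realType) (M : nat) (Ps : set ('I_M -> R)) (D : R)
  : \bar R :=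
  ereal_inf [set ereal_sup [set (mutual_info P Q)%:E | P in Ps]
            | Q in valid Ps D].

Definition D_Mminus1 (R : realType) (M : nat) (Ps : set ('I_M -> R)) : \bar R :=
  ereal_sup [set (\sum_(i < M | (0 < i)%N) P i)%:E | P in Ps].

(* Main.v *)
Require Import Defs.
From HB Require Import structures.
From mathcomp Require Import all_boot all_order all_algebra.
From mathcomp Require Import all_classical all_reals.
From mathcomp Require Import ereal exp.
From mathcomp Require Import perm ring lra.
Import Order.TTheory GRing.Theory Num.Theory.
Local Open Scope classical_set_scope.
Local Open Scope ring_scope.

Section H.
Variable R : realType.

Lemma ln_le1 (x : R) : 0 < x -> ln x <= x - 1.
Proof. move=> x0; have := expR_ge1Dx (ln x); rewrite lnK ?posrE //; lra. Qed.

Lemma lnsq_lb (s : R) : 0 < s -> 2 * s ^+ 2 - 2 * s <= s ^+ 2 * ln (s ^+ 2).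
Proof.
move=> s0.
have e : ln (s ^+ 2) = ln s + ln s by rewrite expr2 lnM ?posrE.
have h := @ln_le1 s^-1 ltac:(by rewrite invr_gt0).
rewrite lnV ?posrE // in h.
have hs : s ^+ 2 * s^-1 = s by rewrite expr2 mulrK // unitfE gt_eqF.
rewrite e.
have : s^+2 * (1 - s^-1) <= s^+2 * ln s.
  by rewrite ler_pM2l ?exprn_gt0 //; lra.
rewrite mulrBr mulr1 hs; lra.
Qed.

Lemma poly_nn (s t : R) : 0 <= t ->
  0 <= (s - 1) ^+ 2 - t * (s ^+ 2 - 1) + t ^+ 2 * (s ^+ 2 + 1).
Proof.
move=> t0.
have k0 : 0 < 1 - t + t ^+ 2 by nra.
have e : (1 - t + t ^+ 2) * ((s - 1) ^+ 2 - t * (s ^+ 2 - 1) + t ^+ 2 * (s ^+ 2 + 1))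
   = ((1 - t + t^+2) * s - 1) ^+ 2 + t ^+ 2 + t ^+ 4 by ring.
have : 0 <= (1 - t + t ^+ 2) * ((s - 1) ^+ 2 - t * (s ^+ 2 - 1) + t ^+ 2 * (s ^+ 2 + 1)).
  rewrite e; apply: addr_ge0; [apply: addr_ge0; [exact: sqr_ge0|exact: sqr_ge0]|].
  by rewrite exprn_ge0.
by rewrite pmulr_rge0.
Qed.

Lemma term_lb (a b t : R) (d : bool) : 0 < a -> 0 < b -> 0 <= t ->
  (a - b) + (if d then t * (a - b) - t ^+ 2 * (a + b) else 0) <= a * ln (a / b).
Proof.
move=> a0 b0 t0.
set x := a / b.
have x0 : 0 < x by rewrite divr_gt0.
set s := Num.sqrt x.
have s0 : 0 < s by rewrite sqrtr_gt0.
have xs : x = s ^+ 2 by rewrite sqr_sqrtr // ltW.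
have ea : a = b * s ^+ 2 by rewrite -xs /x mulrCA divff ?mulr1 // gt_eqF.
rewrite -/x xs ea.
have h1 := @lnsq_lb s s0.
have h2 := @poly_nn s t t0.
have hb : b * (2 * s ^+ 2 - 2 * s) <= b * s ^+ 2 * ln (s ^+ 2).
  by rewrite -mulrA ler_pM2l.
apply: (le_trans _ hb).
case: d.
  have : 0 <= b * ((s - 1) ^+ 2 - t * (s ^+ 2 - 1) + t ^+ 2 * (s ^+ 2 + 1)).
    by rewrite mulr_ge0 // ltW.
  set u := _ - _ + _; move=> hu.
  rewrite -subr_ge0.
  suff -> : b * (2 * s ^+ 2 - 2 * s) - ((b * s ^+ 2 - b) + (t * (b * s ^+ 2 - b) - t ^+ 2 * (b * s ^+ 2 + b))) = b * u by [].
  rewrite /u; ring.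
have : 0 <= b * (s - 1) ^+ 2 by rewrite mulr_ge0 ?sqr_ge0 // ltW.
move=> hu; rewrite addr0 -subr_ge0.
suff -> : b * (2 * s ^+ 2 - 2 * s) - (b * s ^+ 2 - b) = b * (s - 1) ^+ 2 by [].
ring.
Qed.


Lemma mi_lb M (P : 'I_M -> R) (Q : 'M[R]_M) t :
  prob_dist P -> mechanism Q -> 0 <= t ->
  t * (\sum_i P i * Q i i - \sum_i P i * out_prob P Q i)
  - t ^+ 2 * (\sum_i P i * Q i i + \sum_i P i * out_prob P Q i) <= mutual_info P Q.
Proof.
move=> [P0 P1] [Q0 Q1] t0.
have q0 j : 0 <= out_prob P Q j by apply: sumr_ge0 => k _; apply: mulr_ge0.
have qsum : \sum_j out_prob P Q j = 1.
  rewrite /out_prob exchange_big /=.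
  under eq_bigr => k _ do rewrite -mulr_sumr Q1 mulr1.
  exact: P1.
have qge i j : P i * Q i j <= out_prob P Q j.
  by rewrite /out_prob (bigD1 i) //= lerDl; apply: sumr_ge0 => k _; apply: mulr_ge0.
pose g := fun i j : 'I_M => (P i * Q i j - P i * out_prob P Q j) +
  (if i == j then t * (P i * Q i j - P i * out_prob P Q j)
     - t ^+ 2 * (P i * Q i j + P i * out_prob P Q j) else 0).
have step : \sum_i \sum_j g i j <= mutual_info P Q.
  apply: ler_sum => i _; apply: ler_sum => j _.
  have a0 : 0 <= P i * Q i j by apply: mulr_ge0.
  have b0 : 0 <= P i * out_prob P Q j by apply: mulr_ge0.
  case: eqP => [az|/eqP anz].
    rewrite /g az; case: (i == j); last lra.
    have h1 : 0 <= t * (P i * out_prob P Q j) by apply: mulr_ge0.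
    have h2 : 0 <= t ^+ 2 * (P i * out_prob P Q j) by apply: mulr_ge0 => //; rewrite exprn_ge0.
    lra.
  have apos : 0 < P i * Q i j by rewrite lt_def anz.
  have Pi0 : P i != 0 by apply: contra anz => /eqP ->; rewrite mul0r.
  have Pipos : 0 < P i by rewrite lt_def Pi0 P0.
  have bpos : 0 < P i * out_prob P Q j by rewrite mulr_gt0 // (lt_le_trans apos (qge i j)).
  have e : (P i * Q i j) / (P i * out_prob P Q j) = Q i j / out_prob P Q j.
    by rewrite invfM mulrACA divff // mul1r.
  rewrite -e; exact: term_lb.
apply: le_trans step.
rewrite /g /= le_eqVlt; apply/orP; left; apply/eqP; symmetry.
under eq_bigr => i _ do rewrite big_split /=.
rewrite big_split /=.
have -> : \sum_i \sum_j (P i * Q i j - P i * out_prob P Q j) = 0.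
  under eq_bigr => i _ do rewrite sumrB -!mulr_sumr Q1 qsum subrr.
  by rewrite big1.
rewrite add0r.
have ed (i : 'I_M) (F : 'I_M -> R) : \sum_j (if i == j then F j else 0) = F i.
  rewrite (bigD1 i) //= eqxx big1 ?addr0 //.
  by move=> j /negbTE; rewrite eq_sym => ->.
under eq_bigr => i _ do rewrite ed.
rewrite sumrB -!mulr_sumr -!big_split /=.
by rewrite sumrB.
Qed.

Lemma sum_pos M (M0 : (0 < M)%N) (F : 'I_M -> R) :
  \sum_i F i = F (Ordinal M0) + \sum_(i < M | (0 < i)%N) F i.
Proof.
rewrite (bigD1 (Ordinal M0)) //=; congr (_ + _); apply: eq_bigl => i.
by rewrite -(inj_eq val_inj) /= lt0n.
Qed.
End H.

Theorem lemma4 (R : realType) (M : nat) (Ps : set ('I_M -> R)) (D : R) :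
  (2 <= M)%N ->
  source_set Ps ->
  classII Ps ->
  (forall P, Ps P -> forall i j : 'I_M, (i <= j)%N -> P j <= P i) ->
  0 <= D <= 1 ->
  (eps_IT Ps D = 0%E <-> (D%:E >= D_Mminus1 Ps)%E).
Proof.
move=> M2 [Pne Psub] _ Hord /andP[D0 D1].
have M0 : (0 < M)%N by apply: leq_trans M2.
pose i0 := Ordinal M0.
have nonneg : forall Q, valid Ps D Q ->
    (0 <= ereal_sup [set (mutual_info P Q)%:E | P in Ps])%E.
  move=> Q [mQ _]; case: Pne => P PP.
  apply: le_ereal_sup_tmp; exists (mutual_info P Q)%:E; first by exists P.
  rewrite lee_fin; have := @mi_lb R M P Q 0 (Psub _ PP) mQ (lexx 0).
  by rewrite expr2 !mul0r subrr.
split.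
- move=> E; rewrite leNgt; apply/negP => lt.
  have [y [P PP <-] hy] := ereal_sup_gt lt.
  rewrite lte_fin in hy.
  have [P0 P1] := Psub _ PP.
  have hS := @sum_pos R M M0 P; rewrite P1 in hS.
  set S := \sum_(i < M | (0 < i)%N) P i in hy hS.
  pose d := S - D.
  have d0 : 0 < d by rewrite /d subr_gt0.
  have key : forall Q, valid Ps D Q -> d ^+ 2 / 8 <= mutual_info P Q.
    move=> Q [mQ vQ]; have [Q0 Q1] := mQ.
    have := @mi_lb R M P Q (d / 4) (conj P0 P1) mQ (ltW (divr_gt0 d0 (ltr0n _ 4))).
    set A := \sum_i P i * Q i i; set B := \sum_i P i * out_prob P Q i.
    have hA : 1 - D <= A.
      have := vQ P PP; rewrite /distortion.
      under eq_bigr => i _ do rewrite mulrBr mulr1.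
      rewrite sumrB P1 -/A; lra.
    have Qii i : Q i i <= 1.
      by rewrite -(Q1 i) (bigD1 i) //= lerDl; apply: sumr_ge0 => j _.
    have hA1 : A <= 1.
      rewrite -P1; apply: ler_sum => i _; rewrite -[leRHS]mulr1.
      exact: ler_wpM2l.
    have q0 j : 0 <= out_prob P Q j by apply: sumr_ge0 => k _; apply: mulr_ge0.
    have qsum : \sum_j out_prob P Q j = 1.
      rewrite /out_prob exchange_big /=.
      under eq_bigr => k _ do rewrite -mulr_sumr Q1 mulr1.
      exact: P1.
    have hB : B <= P i0.
      rewrite -[leRHS]mulr1 -qsum mulr_sumr; apply: ler_sum => i _.
      by apply: ler_wpM2r => //; apply: Hord.
    have hB0 : 0 <= B by apply: sumr_ge0 => i _; apply: mulr_ge0.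
    move=> h; apply: le_trans h.
    have hd : d <= A - B by rewrite /d; lra.
    have t0 : 0 <= d / 4 by lra.
    have h1 : d / 4 * d <= d / 4 * (A - B) by exact: ler_wpM2l.
    have h2 : (d / 4) ^+ 2 * (A + B) <= (d / 4) ^+ 2 * 2.
      by apply: ler_wpM2l; [rewrite exprn_ge0|lra].
    have e : d ^+ 2 / 8 = d / 4 * d - (d / 4) ^+ 2 * 2 by field.
    rewrite e; lra.
  have : ((d ^+ 2 / 8)%:E <= eps_IT Ps D)%E.
    apply: le_ereal_inf_tmp => z [Q vQ <-].
    apply: le_ereal_sup_tmp; exists (mutual_info P Q)%:E; first by exists P.
    by rewrite lee_fin key.
  rewrite E lee_fin => h.
  have : 0 < d ^+ 2 / 8 by rewrite divr_gt0 // exprn_gt0.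
  lra.
- move=> HD.
  pose Q0 : 'M[R]_M := \matrix_(i, j) (j == i0)%:R.
  have rs : \sum_(j < M) ((j == i0)%:R : R) = 1.
    by rewrite (bigD1 i0) //= ?eqxx big1 ?addr0 // => j /negbTE ->.
  have vQ0 : valid Ps D Q0.
    split; first split.
    + by move=> i j; rewrite mxE ler0n.
    + by move=> i; under eq_bigr => j _ do rewrite mxE.
    move=> P PP; rewrite /distortion.
    under eq_bigr => i _ do rewrite mxE.
    rewrite (@sum_pos R M M0) -/i0 eqxx subrr mulr0 add0r.
    have -> : \sum_(i < M | (0 < i)%N) P i * (1 - (i == i0)%:R) =
              \sum_(i < M | (0 < i)%N) P i.
      apply: eq_bigr => i hi.
      have -> : (i == i0) = false.
        apply/negbTE; rewrite -(inj_eq val_inj) /= -lt0n //.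
      by rewrite subr0 mulr1.
    rewrite -lee_fin; apply: le_trans HD.
    by apply: ereal_sup_ubound; exists P.
  have mi0 : forall P, prob_dist P -> mutual_info P Q0 = 0.
    move=> P [P0 P1]; apply: big1 => i _; apply: big1 => j _.
    rewrite mxE; case E: (j == i0); last by rewrite mulr0 eqxx.
    move/eqP: E => ->.
    have -> : out_prob P Q0 i0 = 1.
      rewrite /out_prob -P1; apply: eq_bigr => k _.
      by rewrite mxE eqxx mulr1.
    by rewrite divr1 ln1 mulr0; case: ifP.
  apply: le_anti; apply/andP; split.
    apply: ge_ereal_inf; exists (ereal_sup [set (mutual_info P Q0)%:E | P in Ps]).
      by exists Q0.
    apply: ge_ereal_sup => z [P PP <-].
    by rewrite mi0 //; apply: Psub.
  apply: le_ereal_inf_tmp => z [Q vQ <-].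
  exact: nonneg.
Qed.
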